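(* Let $d,H\ge1$, $T_{\max}\ge2$. Consider the model and loss defined in the context, with the unitary context distribution. Let $\theta^*=(\mathtt{A}^*,\mathtt{B}^*,P^* )$ satisfy $\ell(\theta^* )=0$ and set $\mathtt{C}^*=\mathtt{B}^{*\top}\mathtt{A}^*$. Then for every $T\in\{2,\dots,T_{\max}\}$: $P^*_{T-1,t}=0$ for all $t\in\{1,\dots,T-1\}$; $P^*_{T-1,T}\,\mathtt{C}^*_{ii}=1$ for all $i$; and $\mathtt{C}^*_{ij}=0$ for all $i\ne j$. Consequently $H\ge d$, and for every $\lambda$ with unit-modulus coordinates and $e_t=\lambda^{t-1}$, $\mathcal{T}_{\theta^*}(e_{1:T})=(\bar e_{T-1}\odot e_T)\odot e_T$ $(=\lambda^T)$.
   Context: Setting: $\lambda\in\mathbb{C}^d$ has i.i.d. coordinates uniform on the unit circle (unitary context distribution); $s_t=e_t=\lambda^{t-1}$ (coordinatewise powers; $s_1=1_d$, $s_{t+1}=\mathrm{diag}(\lambda)s_t$). Parameters $\theta=(\mathtt{A},\mathtt{B},P)$ with $\mathtt{A},\mathtt{B}\in\mathbb{R}^{H\times d}$ whose rows are $a_h,b_h\in\mathbb{R}^d$, and $P\in\mathbb{R}^{T_{\max}\times T_{\max}}$. Model: $\mathcal{T}_\theta(e_{1:T})=\sum_{h=1}^H\sum_{t=1}^T P_{T-1,t}\langle e_t,\mathrm{diag}(a_h)e_{T-1}\rangle_{\mathbb{C}}\mathrm{diag}(b_h)e_t$, where $\langle x,y\rangle_{\mathbb{C}}=\sum_i x_i\bar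 y_i$. Loss: $\ell(\theta)=\sum_{T=2}^{T_{\max}}\mathbb{E}_\lambda\|\mathcal{T}_\theta(e_{1:T})-s_{T+1}\|^2$ (Hermitian norm). $\odot$ is the coordinatewise product, bar is complex conjugation. *)

(* Defs.v *)
From Stdlib Require Import Reals.
From Coquelicot Require Import Coquelicot.
Open Scope R_scope.

Notation Cx := Complex.C.

Fixpoint Rsum (n : nat) (f : nat -> R) : R :=
  match n with O => 0 | S m => Rsum m f + f m end.
Fixpoint Csum (n : nat) (f : nat -> Cx) : Cx :=
  match n with O => RtoC 0 | S m => Cplus (Csum m f) (f m) end.

Fixpoint cpown (z : Cx) (n : nat) : Cx :=
  match n with O => RtoC 1 | S m => Cmult z (cpown z m) end.

(* Vectors of C^d are functions nat -> Cx, only coordinates 0..d-1 matter. *)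
Definition cinner (d : nat) (x y : nat -> Cx) : Cx :=
  Csum d (fun i => Cmult (x i) (Cconj (y i))).
Definition cnorm2 (d : nat) (x : nat -> Cx) : R :=
  Rsum d (fun i => Cmod (x i) ^ 2).
Definition cdiag (a : nat -> R) (x : nat -> Cx) : nat -> Cx :=
  fun i => Cmult (RtoC (a i)) (x i).

(* e_t = lambda^(t-1) coordinatewise (t is 1-indexed). *)
Definition e_seq (lam : nat -> Cx) (t : nat) : nat -> Cx :=
  fun i => cpown (lam i) (t - 1).

(* Parameters: A, B : H x d real matrices given as (h,i) |-> entry, h < H, i < d
   (0-indexed); P : Tmax x Tmax real matrix given with 1-indexed entries P k t.
   Model:
   T_theta(e_{1:T}) = sum_{h<H} sum_{t=1}^T P_{T-1,t} <e_t, diag(a_h) e_{T-1}>_C diag(b_h) e_t *)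
Definition model (d H : nat) (A B P : nat -> nat -> R) (e : nat -> nat -> Cx)
  (T : nat) : nat -> Cx :=
  fun j => Csum H (fun h => Csum T (fun t0 =>
    let t := S t0 in
    Cmult (Cmult (RtoC (P (T - 1)%nat t))
                 (cinner d (e t) (cdiag (A h) (e (T - 1)%nat))))
          (cdiag (B h) (e t) j))).

(* Expectation over lambda with i.i.d. coordinates uniform on the unit circle:
   lambda_i = exp(i theta_i) with theta_i i.i.d. uniform on [0, 2 pi];
   the d-fold integral is written as an iterated Riemann integral. *)
Definition upd (th : nat -> R) (m : nat) (x : R) : nat -> R :=
  fun i => if Nat.eqb i m then x else th i.
Fixpoint iter_int (n : nat) (f : (nat -> R) -> R) : R :=
  match n with
  | O => f (fun _ => 0)
  | S m => RInt (fun x => iter_int m (fun th => f (upd th m x))) 0 (2 * PI)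
  end.
Definition unit_pt (th : nat -> R) : nat -> Cx :=
  fun i => (cos (th i), sin (th i)).
Definition E_unit (d : nat) (F : (nat -> Cx) -> R) : R :=
  iter_int d (fun th => F (unit_pt th)) / (2 * PI) ^ d.

(* Loss: sum_{T=2}^{Tmax} E_lambda || T_theta(e_{1:T}) - s_{T+1} ||^2,
   with s_{T+1} = lambda^T. *)
Definition loss (d H Tmax : nat) (A B P : nat -> nat -> R) : R :=
  Rsum (Tmax - 1) (fun k =>
    let T := (k + 2)%nat in
    E_unit d (fun lam =>
      cnorm2 d (fun j => Cminus (model d H A B P (e_seq lam) T j)
                               (cpown (lam j) T)))).

Definition Cmat (H : nat) (A B : nat -> nat -> R) (i j : nat) : R :=
  Rsum H (fun h => B h i * A h j).

(* Main.v *)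
Require Import Defs.
From Stdlib Require Import Reals Lra Lia FunctionalExtensionality.
From Coquelicot Require Import Coquelicot.
Open Scope R_scope.


Lemma Csum_ext n (f g : nat -> Cx) : (forall k, (k < n)%nat -> f k = g k) -> Csum n f = Csum n g.
Proof. induction n; simpl; intros Hf; auto. rewrite IHn by (intros; apply Hf; lia). rewrite Hf by lia. reflexivity. Qed.

Lemma Csum_plus n (f g : nat -> Cx) : Csum n (fun k => f k + g k)%C = (Csum n f + Csum n g)%C.
Proof. induction n; simpl. ring. rewrite IHn. ring. Qed.

Lemma Csum_mult_l n (c : Cx) (f : nat -> Cx) : (c * Csum n f)%C = Csum n (fun k => c * f k)%C.
Proof. induction n; simpl. ring. rewrite <- IHn. ring. Qed.

Lemma Csum_mult_r n (c : Cx) (f : nat -> Cx) : (Csum n f * c)%C = Csum n (fun k => f k * c)%C.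
Proof. induction n; simpl. ring. rewrite <- IHn. ring. Qed.

Lemma Csum_zero n (f : nat -> Cx) : (forall k, (k < n)%nat -> f k = 0%C) -> Csum n f = 0%C.
Proof. induction n; simpl; intros Hf; auto. rewrite IHn by (intros; apply Hf; lia). rewrite Hf by lia. ring. Qed.

Lemma Csum_swap n m (f : nat -> nat -> Cx) : Csum n (fun i => Csum m (fun k => f i k)) = Csum m (fun k => Csum n (fun i => f i k)).
Proof.
  induction n; simpl.
  - symmetry. apply Csum_zero. auto.
  - rewrite IHn. rewrite <- Csum_plus. reflexivity.
Qed.

Lemma Csum_single n (f : nat -> Cx) k0 : (k0 < n)%nat -> (forall k, (k < n)%nat -> k <> k0 -> f k = 0%C) -> Csum n f = f k0.
Proof.
  induction n; intros Hk Hf. lia. simpl. destruct (Nat.eq_dec k0 n).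
  - subst. rewrite Csum_zero; [ring|]. intros; apply Hf; lia.
  - rewrite IHn by (try lia; intros; apply Hf; lia). rewrite (Hf n) by lia. ring.
Qed.

Lemma Csum2_single T d (f : nat -> nat -> Cx) t1 i1 : (t1 < T)%nat -> (i1 < d)%nat ->
  (forall t i, (t < T)%nat -> (i < d)%nat -> ~ (t = t1 /\ i = i1) -> f t i = 0%C) ->
  Csum T (fun t => Csum d (fun i => f t i)) = f t1 i1.
Proof.
  intros H1 H2 Hf. rewrite (Csum_single T (fun t => Csum d (fun i => f t i)) t1); auto.
  - apply Csum_single; auto. intros; apply Hf; auto; lia.
  - intros. apply Csum_zero. intros; apply Hf; auto; lia.
Qed.

Lemma RtoC_Rsum n (f : nat -> R) : RtoC (Rsum n f) = Csum n (fun k => RtoC (f k)).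
Proof. induction n; simpl. reflexivity. rewrite <- IHn, RtoC_plus. reflexivity. Qed.

Lemma Rsum_ext n (f g : nat -> R) : (forall k, (k < n)%nat -> f k = g k) -> Rsum n f = Rsum n g.
Proof. induction n; simpl; intros Hf; auto. rewrite IHn by (intros; apply Hf; lia). rewrite Hf by lia. reflexivity. Qed.

Lemma Rsum_nonneg n (f : nat -> R) : (forall k, (k < n)%nat -> 0 <= f k) -> 0 <= Rsum n f.
Proof. induction n; simpl; intros Hf. lra. assert (0 <= f n) by (apply Hf; lia).
  assert (0 <= Rsum n f) by (apply IHn; intros; apply Hf; lia). lra. Qed.

Lemma Rsum_zero_each n (f : nat -> R) : (forall k, (k < n)%nat -> 0 <= f k) -> Rsum n f = 0 ->
  forall k, (k < n)%nat -> f k = 0.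
Proof.
  induction n; simpl; intros Hf Hs k Hk. lia.
  assert (0 <= f n) by (apply Hf; lia).
  assert (0 <= Rsum n f) by (apply Rsum_nonneg; intros; apply Hf; lia).
  destruct (Nat.eq_dec k n). subst; lra.
  apply IHn; try lra; try lia. intros; apply Hf; lia.
Qed.

Lemma cpown_add (z : Cx) a b : cpown z (a + b) = (cpown z a * cpown z b)%C.
Proof. induction a; simpl. ring. rewrite IHa. ring. Qed.

Lemma cpown_mul (z : Cx) a b : cpown z (a * b) = cpown (cpown z a) b.
Proof. induction b; simpl. rewrite Nat.mul_0_r. reflexivity.
  rewrite Nat.mul_succ_r, cpown_add, IHb. ring. Qed.

Lemma cpown_1 (z : Cx) : cpown z 1 = z.
Proof. simpl. ring. Qed.

Lemma cpown_conj (z : Cx) n : Cconj (cpown z n) = cpown (Cconj z) n.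
Proof. induction n; simpl.
  - unfold Cconj; simpl. apply injective_projections; simpl; lra.
  - rewrite Cmult_conj, IHn. reflexivity. Qed.

Lemma Cmod_cpown (z : Cx) n : Cmod (cpown z n) = Cmod z ^ n.
Proof. induction n; simpl. apply Cmod_1. rewrite Cmod_mult, IHn. reflexivity. Qed.

Lemma cis_mult a b : Cmult (cos a, sin a) (cos b, sin b) = (cos (a + b), sin (a + b)).
Proof. unfold Cmult; simpl. rewrite cos_plus, sin_plus. apply injective_projections; simpl; ring. Qed.

Lemma demoivre x n : cpown (cos x, sin x) n = (cos (INR n * x), sin (INR n * x)).
Proof. induction n; cbn [cpown].
  - simpl INR. rewrite Rmult_0_l, cos_0, sin_0. reflexivity.
  - rewrite IHn, cis_mult. rewrite S_INR. f_equal; f_equal; ring. Qed.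

Lemma Cmod_cis x : Cmod (cos x, sin x) = 1.
Proof. unfold Cmod; cbn [fst snd]. replace (cos x ^ 2 + sin x ^ 2) with 1 by (rewrite <- (sin2_cos2 x); unfold Rsqr; ring). apply sqrt_1. Qed.


Lemma abs_sin_le_pos x : 0 <= x -> Rabs (sin x) <= x.
Proof.
  intros Hx. destruct (Req_dec x 0) as [->|Hx0]. rewrite sin_0, Rabs_R0. lra.
  pose proof (sin_lt_x x ltac:(lra)). pose proof (SIN_bound x).
  apply Rabs_le. split; [|lra].
  destruct (Rle_dec 1 x). lra.
  assert (0 < sin x). { apply sin_gt_0. lra. pose proof PI2_1. lra. } lra.
Qed.

Lemma abs_sin_le x : Rabs (sin x) <= Rabs x.
Proof.
  destruct (Rle_dec 0 x). rewrite (Rabs_right x) by lra. apply abs_sin_le_pos; lra.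
  assert (H := abs_sin_le_pos (-x) ltac:(lra)). rewrite sin_neg, Rabs_Ropp in H. rewrite (Rabs_left x) by lra. lra.
Qed.

Lemma cos_lip a b : Rabs (cos a - cos b) <= Rabs (a - b).
Proof.
  rewrite form2. rewrite !Rabs_mult. pose proof (SIN_bound ((a + b) / 2)).
  pose proof (abs_sin_le ((a - b) / 2)).
  assert (Rabs (sin ((a + b) / 2)) <= 1) by (apply Rabs_le; lra).
  assert (Rabs ((a - b) / 2) = Rabs (a - b) / 2).
  { unfold Rdiv. rewrite Rabs_mult, (Rabs_right (/2)) by lra. reflexivity. }
  rewrite (Rabs_left (-2)) by lra.
  pose proof (Rabs_pos (sin ((a - b) / 2))). pose proof (Rabs_pos (sin ((a + b) / 2))).
  nra.
Qed.

Lemma sin_lip a b : Rabs (sin a - sin b) <= Rabs (a - b).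
Proof.
  rewrite form4. rewrite !Rabs_mult. pose proof (COS_bound ((a + b) / 2)).
  pose proof (abs_sin_le ((a - b) / 2)).
  assert (Rabs (cos ((a + b) / 2)) <= 1) by (apply Rabs_le; lra).
  assert (Rabs ((a - b) / 2) = Rabs (a - b) / 2).
  { unfold Rdiv. rewrite Rabs_mult, (Rabs_right (/2)) by lra. reflexivity. }
  rewrite (Rabs_right 2) by lra.
  pose proof (Rabs_pos (sin ((a - b) / 2))). pose proof (Rabs_pos (cos ((a + b) / 2))).
  nra.
Qed.

Lemma Cmod_pair_le x y : Cmod (x, y) <= Rabs x + Rabs y.
Proof.
  unfold Cmod; cbn [fst snd].
  rewrite <- (sqrt_Rsqr (Rabs x + Rabs y)) by (pose proof (Rabs_pos x); pose proof (Rabs_pos y); lra).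
  apply sqrt_le_1_alt. unfold Rsqr. rewrite <- (pow2_abs x), <- (pow2_abs y).
  pose proof (Rabs_pos x); pose proof (Rabs_pos y). nra.
Qed.

Definition UCc (F : (nat -> R) -> Cx) : Prop :=
  (exists M, forall th, Cmod (F th) <= M) /\
  (forall eps, 0 < eps -> exists del, 0 < del /\
     forall th th', (forall i, Rabs (th i - th' i) < del) -> Cmod (F th - F th')%C < eps).

Definition UCr (f : (nat -> R) -> R) : Prop :=
  forall eps, 0 < eps -> exists del, 0 < del /\
     forall th th', (forall i, Rabs (th i - th' i) < del) -> Rabs (f th - f th') < eps.

Lemma UCc_const (c : Cx) : UCc (fun _ => c).
Proof.
  split. exists (Cmod c). intros; lra.
  intros eps He. exists 1. split. lra. intros. replace (c - c)%C with (RtoC 0) by ring.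
  rewrite Cmod_0. lra.
Qed.

Lemma UCc_unit i : UCc (fun th => unit_pt th i).
Proof.
  split. exists 1. intros th. unfold unit_pt. rewrite Cmod_cis. lra.
  intros eps He. exists (eps / 2). split. lra. intros th th' Hth.
  unfold unit_pt. unfold Cminus, Cplus, Copp; cbn [fst snd].
  eapply Rle_lt_trans. apply Cmod_pair_le.
  pose proof (cos_lip (th i) (th' i)). pose proof (sin_lip (th i) (th' i)).
  specialize (Hth i). unfold Rminus in *. lra.
Qed.

Lemma UCc_plus F G : UCc F -> UCc G -> UCc (fun th => F th + G th)%C.
Proof.
  intros [[M1 HM1] H1] [[M2 HM2] H2]. split.
  - exists (M1 + M2). intros th. eapply Rle_trans. apply Cmod_triangle.
    specialize (HM1 th); specialize (HM2 th); lra.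
  - intros eps He. destruct (H1 (eps/2)) as [d1 [Hd1 K1]]. lra.
    destruct (H2 (eps/2)) as [d2 [Hd2 K2]]. lra.
    exists (Rmin d1 d2). split. apply Rmin_pos; lra. intros th th' Hth.
    replace (F th + G th - (F th' + G th'))%C with ((F th - F th') + (G th - G th'))%C by ring.
    eapply Rle_lt_trans. apply Cmod_triangle.
    assert (Cmod (F th - F th') < eps/2). { apply K1. intros i. specialize (Hth i). pose proof (Rmin_l d1 d2). lra. }
    assert (Cmod (G th - G th') < eps/2). { apply K2. intros i. specialize (Hth i). pose proof (Rmin_r d1 d2). lra. }
    lra.
Qed.

Lemma UCc_opp F : UCc F -> UCc (fun th => - F th)%C.
Proof.
  intros [[M1 HM1] H1]. split.
  - exists M1. intros th. rewrite Cmod_opp. apply HM1.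
  - intros eps He. destruct (H1 eps He) as [d1 [Hd1 K1]]. exists d1. split. lra.
    intros th th' Hth. replace (- F th - - F th')%C with (- (F th - F th'))%C by ring.
    rewrite Cmod_opp. apply K1; auto.
Qed.

Lemma UCc_minus F G : UCc F -> UCc G -> UCc (fun th => F th - G th)%C.
Proof. intros. unfold Cminus. apply UCc_plus; auto. apply UCc_opp; auto. Qed.

Lemma UCc_conj F : UCc F -> UCc (fun th => Cconj (F th)).
Proof.
  intros [[M1 HM1] H1]. split.
  - exists M1. intros th. rewrite Cmod_conj. apply HM1.
  - intros eps He. destruct (H1 eps He) as [d1 [Hd1 K1]]. exists d1. split. lra.
    intros th th' Hth. replace (Cconj (F th) - Cconj (F th'))%C with (Cconj (F th - F th'))%C.
    rewrite Cmod_conj. apply K1; auto.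
    unfold Cminus. rewrite Cplus_conj. f_equal.
Qed.

Lemma UCc_mult F G : UCc F -> UCc G -> UCc (fun th => F th * G th)%C.
Proof.
  intros [[M1 HM1] H1] [[M2 HM2] H2].
  assert (HM1' : forall th, Cmod (F th) <= Rabs M1 + 1).
  { intros th. specialize (HM1 th). pose proof (Rle_abs M1). lra. }
  assert (HM2' : forall th, Cmod (G th) <= Rabs M2 + 1).
  { intros th. specialize (HM2 th). pose proof (Rle_abs M2). lra. }
  set (K1 := Rabs M1 + 1). set (K2 := Rabs M2 + 1).
  assert (0 < K1) by (unfold K1; pose proof (Rabs_pos M1); lra).
  assert (0 < K2) by (unfold K2; pose proof (Rabs_pos M2); lra).
  split.
  - exists (K1 * K2). intros th. rewrite Cmod_mult.
    apply Rmult_le_compat; try apply Cmod_ge_0; auto.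
  - intros eps He. destruct (H1 (eps/(2*K2))) as [d1 [Hd1 E1]].
    apply Rdiv_lt_0_compat; lra.
    destruct (H2 (eps/(2*K1))) as [d2 [Hd2 E2]].
    apply Rdiv_lt_0_compat; lra.
    exists (Rmin d1 d2). split. apply Rmin_pos; lra. intros th th' Hth.
    replace (F th * G th - F th' * G th')%C with ((F th - F th') * G th + F th' * (G th - G th'))%C by ring.
    eapply Rle_lt_trans. apply Cmod_triangle. rewrite !Cmod_mult.
    assert (A1 : Cmod (F th - F th') < eps/(2*K2)). { apply E1. intros i. specialize (Hth i). pose proof (Rmin_l d1 d2). lra. }
    assert (A2 : Cmod (G th - G th') < eps/(2*K1)). { apply E2. intros i. specialize (Hth i). pose proof (Rmin_r d1 d2). lra. }
    specialize (HM1' th'). specialize (HM2' th). fold K1 in HM1'. fold K2 in HM2'.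
    assert (Cmod (F th - F th') * Cmod (G th) <= eps/(2*K2) * K2).
    { apply Rmult_le_compat; try apply Cmod_ge_0; lra. }
    assert (Cmod (F th') * Cmod (G th - G th') <= K1 * (eps/(2*K1))).
    { apply Rmult_le_compat; try apply Cmod_ge_0; lra. }
    assert (eps/(2*K2) * K2 = eps/2) by (field; lra).
    assert (K1 * (eps/(2*K1)) = eps/2) by (field; lra).
    assert (Cmod (F th - F th') * Cmod (G th) < eps/2 \/ Cmod (F th') * Cmod (G th - G th') < eps / 2).
    { left. destruct (Req_dec (Cmod (G th)) 0) as [E|E]. rewrite E, Rmult_0_r. lra.
      assert (0 < Cmod (G th)) by (pose proof (Cmod_ge_0 (G th)); lra).
      apply Rlt_le_trans with (eps/(2*K2) * Cmod (G th)). apply Rmult_lt_compat_r; lra.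
      apply Rle_trans with (eps/(2*K2) * K2). apply Rmult_le_compat_l. apply Rlt_le, Rdiv_lt_0_compat; lra. lra. lra. }
    destruct H7; lra.
Qed.

Lemma UCc_Csum n (F : nat -> (nat -> R) -> Cx) : (forall k, UCc (F k)) ->
  UCc (fun th => Csum n (fun k => F k th)).
Proof.
  intros HF. induction n; simpl.
  - apply UCc_const.
  - apply UCc_plus; auto.
Qed.

Lemma UCc_cpown F n : UCc F -> UCc (fun th => cpown (F th) n).
Proof.
  intros HF. induction n; simpl.
  - apply UCc_const.
  - apply UCc_mult; auto.
Qed.

Lemma UCr_norm2 F : UCc F -> UCr (fun th => Cmod (F th) ^ 2).
Proof.
  intros [[M HM] H1] eps He.
  set (K := Rabs M + 1).
  assert (HK : forall th, Cmod (F th) <= K).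
  { intros th. specialize (HM th). pose proof (Rle_abs M). unfold K; lra. }
  assert (0 < K) by (unfold K; pose proof (Rabs_pos M); lra).
  destruct (H1 (eps / (2 * K))) as [d [Hd E]]. apply Rdiv_lt_0_compat; lra.
  exists d. split; auto. intros th th' Hth.
  specialize (E th th' Hth).
  assert (Rabs (Cmod (F th) - Cmod (F th')) <= Cmod (F th - F th')).
  { apply Rabs_le. split.
    - pose proof (Cmod_triangle (F th - F th') (F th')).
      replace (F th - F th' + F th')%C with (F th) in H0 by ring.
      replace (Cmod (F th - F th')) with (Cmod (F th' - F th)).
      pose proof (Cmod_triangle (F th' - F th) (F th)).
      replace (F th' - F th + F th)%C with (F th') in H2 by ring. lra.
      replace (F th' - F th)%C with (- (F th - F th'))%C by ring. apply Cmod_opp.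
    - pose proof (Cmod_triangle (F th - F th') (F th')).
      replace (F th - F th' + F th')%C with (F th) in H0 by ring. lra. }
  replace (Cmod (F th) ^ 2 - Cmod (F th') ^ 2) with ((Cmod (F th) - Cmod (F th')) * (Cmod (F th) + Cmod (F th'))) by ring.
  rewrite Rabs_mult.
  pose proof (HK th). pose proof (HK th'). pose proof (Cmod_ge_0 (F th)). pose proof (Cmod_ge_0 (F th')).
  rewrite (Rabs_right (Cmod (F th) + Cmod (F th'))) by lra.
  assert (eps / (2 * K) * (2 * K) = eps) by (field; lra).
  pose proof (Rabs_pos (Cmod (F th) - Cmod (F th'))).
  destruct (Req_dec (Cmod (F th) + Cmod (F th')) 0) as [Z|Z].
  rewrite Z, Rmult_0_r; lra.
  apply Rlt_le_trans with ((eps / (2*K)) * (Cmod (F th) + Cmod (F th'))).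
  apply Rmult_lt_compat_r; lra.
  apply Rle_trans with ((eps / (2*K)) * (2 * K)).
  apply Rmult_le_compat_l. apply Rlt_le, Rdiv_lt_0_compat; lra. lra. lra.
Qed.

Lemma UCr_plus f g : UCr f -> UCr g -> UCr (fun th => f th + g th).
Proof.
  intros H1 H2 eps He.
  destruct (H1 (eps/2)) as [d1 [Hd1 K1]]. lra.
  destruct (H2 (eps/2)) as [d2 [Hd2 K2]]. lra.
  exists (Rmin d1 d2). split. apply Rmin_pos; lra. intros th th' Hth.
  assert (Rabs (f th - f th') < eps/2). { apply K1. intros i. specialize (Hth i). pose proof (Rmin_l d1 d2). lra. }
  assert (Rabs (g th - g th') < eps/2). { apply K2. intros i. specialize (Hth i). pose proof (Rmin_r d1 d2). lra. }
  replace (f th + g th - (f th' + g th')) with ((f th - f th') + (g th - g th')) by ring.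
  eapply Rle_lt_trans. apply Rabs_triang. lra.
Qed.

Lemma UCr_const c : UCr (fun _ => c).
Proof. intros eps He. exists 1. split. lra. intros. replace (c - c) with 0 by ring. rewrite Rabs_R0. lra. Qed.

Lemma UCr_Rsum n (f : nat -> (nat -> R) -> R) : (forall k, UCr (f k)) ->
  UCr (fun th => Rsum n (fun k => f k th)).
Proof.
  intros Hf. induction n; simpl.
  - apply UCr_const.
  - apply UCr_plus; auto.
Qed.


Lemma cont_of_eps (g : R -> R) x :
  (forall eps, 0 < eps -> exists del, 0 < del /\ forall y, Rabs (y - x) < del -> Rabs (g y - g x) < eps) ->
  continuous g x.
Proof.
  intros H. apply continuity_pt_filterlim.
  intros eps He. destruct (H eps He) as [d [Hd Hy]]. exists d. split; auto.
  intros y [_ Hy2]. unfold R_dist in *. simpl in *. apply Hy. exact Hy2.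
Qed.

Lemma eps_of_cont (g : R -> R) x : continuous g x ->
  forall eps, 0 < eps -> exists del, 0 < del /\ forall y, Rabs (y - x) < del -> Rabs (g y - g x) < eps.
Proof.
  intros H. apply continuity_pt_filterlim in H.
  intros eps He. destruct (H eps He) as [d [Hd Hy]]. exists d. split; auto.
  intros y Hyx. destruct (Req_dec y x) as [->|Hne]. unfold Rminus; rewrite Rplus_opp_r, Rabs_R0; lra.
  apply Hy. split. split. exact I. auto. exact Hyx.
Qed.

Lemma UCr_cont f th m x : UCr f -> continuous (fun y => f (upd th m y)) x.
Proof.
  intros Hf. apply cont_of_eps. intros eps He. destruct (Hf eps He) as [d [Hd K]].
  exists d. split; auto. intros y Hy. apply K. intros i. unfold upd.
  destruct (Nat.eqb i m). auto. unfold Rminus; rewrite Rplus_opp_r, Rabs_R0; lra.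
Qed.

Lemma UCr_exRInt f th m a b : UCr f -> ex_RInt (fun y => f (upd th m y)) a b.
Proof. intros Hf. apply (@ex_RInt_continuous R_CompleteNormedModule). intros. apply UCr_cont; auto. Qed.

Lemma RInt_zero_nonneg (g : R -> R) a b : a < b -> (forall x, continuous g x) ->
  (forall x, a <= x <= b -> 0 <= g x) -> RInt g a b = 0 -> forall x, a <= x <= b -> g x = 0.
Proof.
  intros Hab Hc Hpos HI x0 Hx0.
  destruct (Req_dec (g x0) 0) as [E|E]; auto. exfalso.
  assert (Hg0 : 0 < g x0) by (pose proof (Hpos x0 Hx0); lra).
  destruct (eps_of_cont g x0 (Hc x0) (g x0 / 2)) as [d [Hd K]]. lra.
  set (c := Rmax a (x0 - d/2)). set (e := Rmin b (x0 + d/2)).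
  assert (Hc1 : a <= c) by apply Rmax_l.
  assert (He1 : e <= b) by apply Rmin_l.
  assert (Hce : c < e).
  { unfold c, e, Rmax, Rmin. destruct (Rle_dec a (x0 - d/2)), (Rle_dec b (x0 + d/2)); lra. }
  assert (Hc2 : x0 - d/2 <= c) by apply Rmax_r.
  assert (He2 : e <= x0 + d/2) by apply Rmin_r.
  assert (Hex : forall u v, ex_RInt g u v). { intros. apply (@ex_RInt_continuous R_CompleteNormedModule). intros; apply Hc. }
  assert (E1 : RInt g a b = RInt g a c + RInt g c e + RInt g e b).
  { rewrite <- (RInt_Chasles g a e b) by auto. rewrite <- (RInt_Chasles g a c e) by auto. reflexivity. }
  assert (I1 : 0 <= RInt g a c). { apply RInt_ge_0; auto. intros; apply Hpos; lra. }
  assert (I3 : 0 <= RInt g e b). { apply RInt_ge_0; auto. intros; apply Hpos; lra. }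
  assert (I2 : (e - c) * (g x0 / 2) <= RInt g c e).
  { replace ((e - c) * (g x0 / 2)) with (RInt (fun _ => g x0 / 2) c e).
    apply RInt_le; auto. lra. apply ex_RInt_const.
    intros y Hy. assert (Rabs (y - x0) < d). { apply Rabs_def1; lra. }
    specialize (K y H). apply Rabs_def2 in K. lra.
    rewrite RInt_const. reflexivity. }
  assert (0 < (e - c) * (g x0 / 2)) by (apply Rmult_lt_0_compat; lra).
  lra.
Qed.

Definition mix (m : nat) (s th : nat -> R) : nat -> R :=
  fun i => if Nat.ltb i m then s i else th i.
Definition J (m : nat) (f : (nat -> R) -> R) (th : nat -> R) : R :=
  iter_int m (fun s => f (mix m s th)).

Lemma J_0 f th : J 0 f th = f th.
Proof. reflexivity. Qed.

Lemma J_S m f th : J (S m) f th = RInt (fun x => J m f (upd th m x)) 0 (2 * PI).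
Proof.
  unfold J. cbn [iter_int]. f_equal. apply functional_extensionality. intros x.
  f_equal. apply functional_extensionality. intros s. f_equal.
  apply functional_extensionality. intros i. unfold mix, upd.
  destruct (Nat.ltb_spec i (S m)), (Nat.ltb_spec i m), (Nat.eqb_spec i m); try lia; reflexivity.
Qed.

Lemma iter_J m f : iter_int m f = J m f (fun _ => 0).
Proof.
  revert f. induction m; intros f.
  - rewrite J_0. simpl. reflexivity.
  - rewrite J_S. cbn [iter_int]. f_equal. apply functional_extensionality. intros x.
    rewrite IHm. unfold J. f_equal. apply functional_extensionality. intros s. f_equal.
    apply functional_extensionality. intros i. unfold mix, upd.
    destruct (Nat.ltb_spec i m), (Nat.eqb_spec i m); try lia; reflexivity.
Qed.

Lemma J_UC m f : UCr f -> UCr (J m f).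
Proof.
  intros Hf. induction m.
  - exact Hf.
  - intros eps He. pose proof PI_RGT_0.
    destruct (IHm (eps / (4 * PI))) as [d [Hd K]]. apply Rdiv_lt_0_compat; lra.
    exists d; split; auto. intros th th' Hth. rewrite !J_S.
    assert (Ex1 := UCr_exRInt _ th m 0 (2*PI) IHm).
    assert (Ex2 := UCr_exRInt _ th' m 0 (2*PI) IHm).
    assert (E : RInt (fun x => J m f (upd th m x)) 0 (2 * PI) - RInt (fun x => J m f (upd th' m x)) 0 (2 * PI)
       = RInt (fun x => J m f (upd th m x) - J m f (upd th' m x)) 0 (2 * PI)).
    { symmetry. apply (RInt_minus (V := R_CompleteNormedModule)); auto. }
    rewrite E.
    eapply Rle_lt_trans. apply (abs_RInt_le_const _ _ _ (eps / (4 * PI))). lra.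
    apply (ex_RInt_minus (V := R_NormedModule)); auto.
    intros t Ht. apply Rlt_le, K. intros i. unfold upd. destruct (Nat.eqb i m).
    unfold Rminus; rewrite Rplus_opp_r, Rabs_R0; lra. auto.
    replace ((2 * PI - 0) * (eps / (4 * PI))) with (eps / 2) by (field; lra). lra.
Qed.

Lemma J_nonneg m f th : UCr f -> (forall th, 0 <= f th) -> 0 <= J m f th.
Proof.
  intros Hf Hp. revert th. induction m; intros th.
  - rewrite J_0. auto.
  - rewrite J_S. apply RInt_ge_0. pose proof PI_RGT_0; lra.
    apply UCr_exRInt. apply J_UC; auto. intros; auto.
Qed.

Lemma J_zero m f th : UCr f -> (forall th, 0 <= f th) -> J m f th = 0 ->
  forall s, (forall i, (i < m)%nat -> 0 <= s i <= 2 * PI) -> f (mix m s th) = 0.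
Proof.
  intros Hf Hp. revert th. induction m; intros th HJ s Hs.
  - rewrite J_0 in HJ. exact HJ.
  - rewrite J_S in HJ.
    assert (Hz := RInt_zero_nonneg _ 0 (2 * PI) ltac:(pose proof PI_RGT_0; lra)
      (fun x => UCr_cont _ th m x (J_UC m f Hf))
      (fun x _ => J_nonneg m f _ Hf Hp) HJ (s m) (Hs m ltac:(lia))).
    specialize (IHm _ Hz s ltac:(intros; apply Hs; lia)).
    replace (mix (S m) s th) with (mix m s (upd th m (s m))); auto.
    apply functional_extensionality; intros i; unfold mix, upd.
    destruct (Nat.ltb_spec i (S m)), (Nat.ltb_spec i m), (Nat.eqb_spec i m); subst; try lia; reflexivity.
Qed.


Definition Fint (d H : nat) (A B P : nat -> nat -> R) (T : nat) (lam : nat -> Cx) : R :=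
  cnorm2 d (fun j => Cminus (model d H A B P (e_seq lam) T j) (cpown (lam j) T)).

Lemma Fint_UC d H A B P T : UCr (fun th => Fint d H A B P T (unit_pt th)).
Proof.
  unfold Fint, cnorm2. apply UCr_Rsum. intros j. apply UCr_norm2.
  apply UCc_minus; [| apply UCc_cpown, UCc_unit].
  unfold model, cinner, cdiag, e_seq. cbv zeta.
  apply UCc_Csum; intros h. apply UCc_Csum; intros t0.
  apply UCc_mult; [apply UCc_mult|].
  - apply UCc_const.
  - apply UCc_Csum; intros i. apply UCc_mult. apply UCc_cpown, UCc_unit.
    apply UCc_conj. apply UCc_mult. apply UCc_const. apply UCc_cpown, UCc_unit.
  - apply UCc_mult. apply UCc_const. apply UCc_cpown, UCc_unit.
Qed.

Lemma Fint_nonneg d H A B P T lam : 0 <= Fint d H A B P T lam.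
Proof. unfold Fint, cnorm2. apply Rsum_nonneg. intros. apply pow2_ge_0. Qed.

Definition argf (z : Cx) : R :=
  if Rle_dec 0 (snd z) then acos (fst z) else 2 * PI - acos (fst z).

Lemma argf_spec z : Cmod z = 1 -> 0 <= argf z <= 2 * PI /\ (cos (argf z), sin (argf z)) = z.
Proof.
  destruct z as [x y]. unfold Cmod; cbn [fst snd]. intros Hz.
  assert (H1 : x ^ 2 + y ^ 2 = 1).
  { assert (Hs : sqrt (x ^ 2 + y ^ 2) ^ 2 = 1) by (rewrite Hz; ring).
    rewrite pow2_sqrt in Hs; auto. nra. }
  assert (Hx : -1 <= x <= 1) by nra.
  pose proof (acos_bound x). pose proof PI_RGT_0.
  assert (Hsq : 1 - x² = y ^ 2) by (unfold Rsqr; nra).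
  unfold argf; cbn [fst snd]. destruct (Rle_dec 0 y).
  - split. lra. rewrite cos_acos, sin_acos by lra. rewrite Hsq, sqrt_pow2 by lra. reflexivity.
  - split. lra. rewrite cos_minus, sin_minus, cos_2PI, sin_2PI, cos_acos, sin_acos by lra.
    rewrite Hsq. replace (y ^ 2) with ((- y) ^ 2) by ring. rewrite sqrt_pow2 by lra.
    apply injective_projections; cbn [fst snd]; ring.
Qed.

Lemma model_dep d H A B P T (lam lam' : nat -> Cx) j :
  (forall i, (i < d)%nat -> lam i = lam' i) -> (j < d)%nat ->
  model d H A B P (e_seq lam) T j = model d H A B P (e_seq lam') T j.
Proof.
  intros Hl Hj. unfold model, cinner, cdiag, e_seq. cbv zeta.
  apply Csum_ext; intros h _. apply Csum_ext; intros t0 _.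
  rewrite (Hl j Hj). f_equal. f_equal. apply Csum_ext. intros i Hi. rewrite (Hl i Hi). reflexivity.
Qed.

Lemma Fint_dep d H A B P T (lam lam' : nat -> Cx) :
  (forall i, (i < d)%nat -> lam i = lam' i) ->
  Fint d H A B P T lam = Fint d H A B P T lam'.
Proof.
  intros Hl. unfold Fint, cnorm2. apply Rsum_ext. intros j Hj.
  rewrite (model_dep d H A B P T lam lam' j Hl Hj), (Hl j Hj). reflexivity.
Qed.

Lemma pointwise d H Tmax A B P : loss d H Tmax A B P = 0 ->
  forall T, (2 <= T <= Tmax)%nat -> forall lam : nat -> Cx, (forall i, (i < d)%nat -> Cmod (lam i) = 1) ->
  forall j, (j < d)%nat -> model d H A B P (e_seq lam) T j = cpown (lam j) T.
Proof.
  intros HL T HT lam Hlam j Hj.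
  pose proof PI_RGT_0 as HPI.
  assert (HE : forall T', 0 <= E_unit d (Fint d H A B P T')).
  { intros T'. unfold E_unit. apply Rmult_le_pos.
    rewrite iter_J. apply J_nonneg. apply Fint_UC. intros; apply Fint_nonneg.
    apply Rlt_le, Rinv_0_lt_compat, pow_lt. lra. }
  unfold loss in HL.
  assert (H0 : E_unit d (Fint d H A B P T) = 0).
  { pose proof (Rsum_zero_each _ _ (fun k _ => HE (k + 2)%nat) HL (T - 2)%nat ltac:(lia)) as H0.
    cbv beta in H0. replace (T - 2 + 2)%nat with T in H0 by lia. exact H0. }
  assert (Hi : iter_int d (fun th => Fint d H A B P T (unit_pt th)) = 0).
  { unfold E_unit in H0. assert (0 < (2 * PI) ^ d) by (apply pow_lt; lra).
    unfold Rdiv in H0. apply Rmult_integral in H0. destruct H0 as [H0|H0]; auto.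
    exfalso. assert (0 < / (2*PI)^d) by (apply Rinv_0_lt_compat; lra). lra. }
  rewrite iter_J in Hi.
  set (s := fun i => argf (lam i)).
  assert (Hz := J_zero d _ _ (Fint_UC d H A B P T) (fun th => Fint_nonneg d H A B P T _) Hi s
    (fun i Hi => proj1 (argf_spec (lam i) (Hlam i Hi)))).
  cbv beta in Hz. rewrite (Fint_dep d H A B P T _ lam) in Hz.
  2: { intros i Hi2. unfold unit_pt, mix. destruct (Nat.ltb_spec i d); [|lia].
       apply (proj2 (argf_spec (lam i) (Hlam i Hi2))). }
  unfold Fint, cnorm2 in Hz.
  assert (Hj2 := Rsum_zero_each _ _ (fun k _ => pow2_ge_0 _) Hz j Hj). cbv beta in Hj2.
  assert (Cmod (model d H A B P (e_seq lam) T j - cpown (lam j) T)%C = 0).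
  { pose proof (Cmod_ge_0 (model d H A B P (e_seq lam) T j - cpown (lam j) T)%C). nra. }
  apply Cmod_eq_0 in H1.
  replace (model d H A B P (e_seq lam) T j) with ((model d H A B P (e_seq lam) T j - cpown (lam j) T) + cpown (lam j) T)%C by ring.
  rewrite H1. ring.
Qed.


Lemma Cconj_RtoC (x : R) : Cconj (RtoC x) = RtoC x.
Proof. unfold Cconj, RtoC; cbn [fst snd]. apply injective_projections; cbn [fst snd]; ring. Qed.

Lemma model_expand d H A B P T (lam : nat -> Cx) j :
  model d H A B P (e_seq lam) T j =
  Csum T (fun t0 => Csum d (fun i => (RtoC (P (T-1)%nat (S t0)) * RtoC (Cmat H A B j i) *
     (cpown (lam i) t0 * Cconj (cpown (lam i) (T-1-1)) * cpown (lam j) t0))%C)).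
Proof.
  unfold model, cinner, cdiag, e_seq; cbv zeta.
  transitivity (Csum H (fun h => Csum T (fun t0 => Csum d (fun i =>
     (RtoC (B h j * A h i) * (RtoC (P (T-1)%nat (S t0)) *
       (cpown (lam i) t0 * Cconj (cpown (lam i) (T-1-1)) * cpown (lam j) t0)))%C)))).
  { apply Csum_ext; intros h _. apply Csum_ext; intros t0 _.
    replace (S t0 - 1)%nat with t0 by lia. rewrite Csum_mult_l, Csum_mult_r.
    apply Csum_ext; intros i _. rewrite Cmult_conj, Cconj_RtoC, RtoC_mult. ring. }
  rewrite Csum_swap. apply Csum_ext; intros t0 _. rewrite Csum_swap. apply Csum_ext; intros i _.
  rewrite <- (Csum_mult_r H _ (fun h => RtoC (B h j * A h i))).
  unfold Cmat. rewrite RtoC_Rsum. ring.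
Qed.

Lemma cis_conj x : Cconj (cos x, sin x) = (cos (-x), sin (-x)).
Proof. unfold Cconj; cbn [fst snd]. rewrite cos_neg, sin_neg. reflexivity. Qed.

Lemma geom_sum (r : Cx) n : ((r - 1) * Csum n (fun k => cpown r k))%C = (cpown r n - 1)%C.
Proof. induction n; cbn [Csum cpown]. ring.
  replace ((r - 1) * (Csum n (fun k => cpown r k) + cpown r n))%C with
    ((r - 1) * Csum n (fun k => cpown r k) + (r - 1) * cpown r n)%C by ring.
  rewrite IHn. ring. Qed.

Lemma cpown_one n : cpown (RtoC 1) n = RtoC 1.
Proof. induction n; cbn [cpown]. reflexivity. rewrite IHn. ring. Qed.

Lemma Csum_const n (c : Cx) : Csum n (fun _ => c) = (RtoC (INR n) * c)%C.
Proof. induction n; cbn [Csum]. simpl INR. ring. rewrite IHn, S_INR, RtoC_plus. ring. Qed.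

Lemma cos_lt_1_pos phi : 0 < phi < 2 * PI -> cos phi < 1.
Proof.
  intros Hp. replace phi with (2 * (phi / 2)) by field. rewrite cos_2a_sin.
  assert (0 < sin (phi / 2)) by (apply sin_gt_0; lra). nra.
Qed.

Lemma cos_lt_1 phi : 0 < phi < 2 * PI \/ 0 < - phi < 2 * PI -> cos phi < 1.
Proof.
  intros [Hp|Hp]. apply cos_lt_1_pos; auto. rewrite <- (Ropp_involutive phi), cos_neg. apply cos_lt_1_pos; auto.
Qed.

Lemma cis_int_period (m : nat) : (cos (2 * PI * INR m), sin (2 * PI * INR m)) = RtoC 1.
Proof.
  replace (2 * PI * INR m) with (0 + 2 * INR m * PI) by ring.
  rewrite cos_period, sin_period, cos_0, sin_0. reflexivity.
Qed.

Lemma frac_bound a N : 0 < a < N -> 0 < a * (2 * PI / N) < 2 * PI.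
Proof.
  intros Ha. pose proof PI_RGT_0. split.
  apply Rmult_lt_0_compat; [lra| apply Rdiv_lt_0_compat; lra].
  replace (2 * PI) with (N * (2 * PI / N)) at 2 by (field; lra).
  apply Rmult_lt_compat_r; [apply Rdiv_lt_0_compat|]; lra.
Qed.

Definition wN (N : nat) : Cx := (cos (2 * PI / INR N), sin (2 * PI / INR N)).

Lemma root_sum N x y : (0 < N)%nat -> (x < y + N)%nat -> (y < x + N)%nat ->
  Csum N (fun k => (cpown (cpown (wN N) k) x * cpown (Cconj (cpown (wN N) k)) y)%C) =
  if Nat.eqb x y then RtoC (INR N) else RtoC 0.
Proof.
  intros HN Hxy Hyx. set (th := 2 * PI / INR N). set (phi := (INR x - INR y) * th).
  assert (HNr : 0 < INR N) by (apply lt_0_INR; lia).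
  pose proof PI_RGT_0.
  rewrite (Csum_ext N _ (fun k => cpown (cos phi, sin phi) k)).
  2: { intros k _. unfold wN. fold th. rewrite !demoivre, cis_conj, !demoivre, cis_mult.
       f_equal; f_equal; unfold phi; ring. }
  destruct (Nat.eqb_spec x y).
  - subst. unfold phi. replace ((INR y - INR y) * th) with 0 by ring. rewrite cos_0, sin_0.
    rewrite (Csum_ext N _ (fun _ => RtoC 1)). rewrite Csum_const. ring.
    intros; apply cpown_one.
  - assert (HrN : cpown (cos phi, sin phi) N = RtoC 1).
    { rewrite demoivre. destruct (Nat.lt_ge_cases x y).
      + replace (INR N * phi) with (- (2 * PI * INR (y - x))).
        rewrite cos_neg, sin_neg. pose proof (cis_int_period (y - x)) as E. inversion E as [[E1 E2]].
        rewrite E1, E2. unfold RtoC. f_equal. ring.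
        unfold phi, th. rewrite minus_INR by lia. field. lra.
      + replace (INR N * phi) with (2 * PI * INR (x - y)).
        apply cis_int_period.
        unfold phi, th. rewrite minus_INR by lia. field. lra. }
    assert (Hr1 : (cos phi, sin phi) <> RtoC 1).
    { intros E. inversion E as [E1]. revert E1. apply Rlt_not_eq, cos_lt_1.
      unfold phi, th. destruct (Nat.lt_ge_cases x y).
      + right. assert (INR x < INR y) by (apply lt_INR; auto).
        assert (INR y < INR x + INR N) by (rewrite <- plus_INR; apply lt_INR; lia).
        replace (- ((INR x - INR y) * (2 * PI / INR N))) with ((INR y - INR x) * (2 * PI / INR N)) by ring.
        apply frac_bound; lra.
      + left. assert (INR y < INR x) by (apply lt_INR; lia).
        assert (INR x < INR y + INR N) by (rewrite <- plus_INR; apply lt_INR; lia).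
        apply frac_bound; lra. }
    set (S := Csum N (fun k => cpown (cos phi, sin phi) k)).
    assert (HG := geom_sum (cos phi, sin phi) N). fold S in HG. rewrite HrN in HG.
    assert (Hne : ((cos phi, sin phi) - 1)%C <> RtoC 0).
    { intros E. apply Hr1. replace (cos phi, sin phi) with (((cos phi, sin phi) - 1) + 1)%C by ring.
      rewrite E. apply Cplus_0_l. }
    replace S with (/ ((cos phi, sin phi) - 1) * (((cos phi, sin phi) - 1) * S))%C.
    rewrite HG. ring.
    rewrite Cmult_assoc, Cinv_l by auto. ring.
Qed.

Lemma Cmod_wN_pow N k : Cmod (cpown (wN N) k) = 1.
Proof. rewrite Cmod_cpown. unfold wN. rewrite Cmod_cis. apply pow1. Qed.

Lemma extract T d (c : nat -> nat -> Cx) (a b : nat -> nat -> nat) a0 K p q :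
  (forall t i, (t < T)%nat -> (i < d)%nat -> (a t i <= K)%nat /\ (b t i <= K)%nat) ->
  (a0 <= K)%nat -> (p <= K)%nat -> (q <= K)%nat ->
  (forall z, Cmod z = 1 -> Csum T (fun t => Csum d (fun i => c t i * cpown z (a t i) * cpown (Cconj z) (b t i)))%C = cpown z a0) ->
  Csum T (fun t => Csum d (fun i => if Nat.eqb (a t i + p) (b t i + q) then c t i else RtoC 0)) =
  (if Nat.eqb (a0 + p) q then RtoC 1 else RtoC 0).
Proof.
  intros Hab Ha0 Hp Hq Hz.
  set (N := (2 * K + 1)%nat).
  set (w := fun k => cpown (wN N) k).
  set (m := fun k => (cpown (w k) p * cpown (Cconj (w k)) q)%C).
  assert (HNz : RtoC (INR N) <> RtoC 0).
  { intros E. inversion E as [E1]. assert (0 < INR N) by (apply lt_0_INR; unfold N; lia). lra. }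
  assert (Hsum : Csum N (fun k => Csum T (fun t => Csum d (fun i => c t i * cpown (w k) (a t i) * cpown (Cconj (w k)) (b t i))) * m k)%C
               = Csum N (fun k => cpown (w k) a0 * m k)%C).
  { apply Csum_ext. intros k _. rewrite Hz. reflexivity. unfold w. apply Cmod_wN_pow. }
  assert (HR : Csum N (fun k => cpown (w k) a0 * m k)%C = if Nat.eqb (a0 + p) q then RtoC (INR N) else RtoC 0).
  { rewrite <- root_sum by (unfold N; lia). apply Csum_ext. intros k _. unfold m.
    rewrite cpown_add. fold (w k). ring. }
  assert (HL : Csum N (fun k => Csum T (fun t => Csum d (fun i => c t i * cpown (w k) (a t i) * cpown (Cconj (w k)) (b t i))) * m k)%C
     = (RtoC (INR N) * Csum T (fun t => Csum d (fun i => if Nat.eqb (a t i + p) (b t i + q) then c t i else RtoC 0)))%C).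
  { transitivity (Csum N (fun k => Csum T (fun t => Csum d (fun i => c t i * (cpown (w k) (a t i + p) * cpown (Cconj (w k)) (b t i + q)))))%C).
    { apply Csum_ext. intros k _. rewrite Csum_mult_r. apply Csum_ext. intros t _.
      rewrite Csum_mult_r. apply Csum_ext. intros i _. unfold m. rewrite !cpown_add. ring. }
    rewrite Csum_swap. rewrite Csum_mult_l. apply Csum_ext. intros t Ht.
    rewrite Csum_swap. rewrite Csum_mult_l. apply Csum_ext. intros i Hi.
    rewrite <- Csum_mult_l. unfold w. rewrite root_sum.
    destruct (Nat.eqb (a t i + p) (b t i + q)); ring.
    unfold N; lia. destruct (Hab t i Ht Hi); unfold N; lia. destruct (Hab t i Ht Hi); unfold N; lia. }
  rewrite HL, HR in Hsum.
  replace (if Nat.eqb (a0 + p) q then RtoC (INR N) else RtoC 0) with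
    (RtoC (INR N) * (if Nat.eqb (a0 + p) q then RtoC 1 else RtoC 0))%C in Hsum
    by (destruct (Nat.eqb (a0 + p) q); ring).
  apply (f_equal (fun u => / RtoC (INR N) * u)%C) in Hsum. cbv beta in Hsum.
  rewrite !Cmult_assoc, !Cinv_l, !Cmult_1_l in Hsum by auto. exact Hsum.
Qed.


Lemma RtoC_inj (x y : R) : RtoC x = RtoC y -> x = y.
Proof. intros E. inversion E. reflexivity. Qed.

Section Coeffs.
Variables (d H : nat) (A B P : nat -> nat -> R) (T : nat).
Hypothesis HT : (2 <= T)%nat.
Hypothesis Hpt : forall lam : nat -> Cx, (forall i, (i < d)%nat -> Cmod (lam i) = 1) ->
  forall j, (j < d)%nat -> model d H A B P (e_seq lam) T j = cpown (lam j) T.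

Lemma poly_identity j (n : nat -> nat) : (j < d)%nat -> n j = 1%nat -> forall z, Cmod z = 1 ->
  Csum T (fun t => Csum d (fun i => (RtoC (P (T-1)%nat (S t)) * RtoC (Cmat H A B j i)) *
     cpown z (n i * t + t) * cpown (Cconj z) (n i * (T-1-1)))%C) = cpown z T.
Proof.
  intros Hj Hn z Hz.
  assert (Hu : forall i, (i < d)%nat -> Cmod (cpown z (n i)) = 1).
  { intros i _. rewrite Cmod_cpown, Hz. apply pow1. }
  specialize (Hpt (fun i => cpown z (n i)) Hu j Hj). rewrite model_expand in Hpt.
  rewrite Hn, cpown_1 in Hpt. rewrite <- Hpt.
  apply Csum_ext; intros t _. apply Csum_ext; intros i _. 
  rewrite <- !cpown_mul, cpown_conj, cpown_add. ring.
Qed.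

Definition cc (j : nat) := fun t i => (RtoC (P (T-1)%nat (S t)) * RtoC (Cmat H A B j i))%C.

Lemma cc_real j t i : cc j t i = RtoC (P (T-1)%nat (S t) * Cmat H A B j i).
Proof. unfold cc. rewrite RtoC_mult. reflexivity. Qed.

Lemma coeff_diag j : (j < d)%nat -> P (T-1)%nat T * Cmat H A B j j = 1.
Proof.
  intros Hj. set (n := fun i => if Nat.eqb i j then 1%nat else 0%nat).
  assert (Hn : n j = 1%nat) by (unfold n; rewrite Nat.eqb_refl; reflexivity).
  assert (E := extract T d (cc j) (fun t i => n i * t + t)%nat (fun t i => n i * (T-1-1))%nat T (10*T*T) 0 T).
  cbv beta in E.
  rewrite Nat.add_0_r, Nat.eqb_refl in E.
  rewrite (Csum2_single T d _ (T-1) j) in E; try lia.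
  - rewrite Nat.add_0_r, Hn in E.
    replace (1 * (T - 1) + (T - 1) =? 1 * (T - 1 - 1) + T)%nat with true in E
      by (symmetry; apply Nat.eqb_eq; lia).
    rewrite cc_real in E. apply RtoC_inj in E. replace (S (T - 1)) with T in E by lia. exact E.
  - intros t i Ht Hi. unfold n. destruct (Nat.eqb_spec i j); split; nia.
  - nia.
  - lia.
  - nia.
  - intros z Hz. apply (poly_identity j n Hj Hn z Hz).
  - intros t i Ht Hi Hne. rewrite Nat.add_0_r. unfold n.
    destruct (Nat.eqb_spec i j).
    + destruct (Nat.eqb_spec (1 * t + t) (1 * (T - 1 - 1) + T)); [|reflexivity]. exfalso. apply Hne. lia.
    + destruct (Nat.eqb_spec (0 * t + t) (0 * (T - 1 - 1) + T)); [|reflexivity]. lia.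
Qed.

Lemma coeff_off j i0 : (j < d)%nat -> (i0 < d)%nat -> i0 <> j -> Cmat H A B j i0 = 0.
Proof.
  intros Hj Hi0 Hne0.
  set (n := fun i => if Nat.eqb i j then 1%nat else if Nat.eqb i i0 then (3 * T)%nat else 0%nat).
  assert (Hn : n j = 1%nat) by (unfold n; rewrite Nat.eqb_refl; reflexivity).
  assert (Hn0 : n i0 = (3 * T)%nat).
  { unfold n. destruct (Nat.eqb_spec i0 j); [lia|]. rewrite Nat.eqb_refl. reflexivity. }
  assert (E := extract T d (cc j) (fun t i => n i * t + t)%nat (fun t i => n i * (T-1-1))%nat T (10*T*T) 0 (4 * T - 1)).
  cbv beta in E.
  rewrite Nat.add_0_r in E.
  replace (T =? 4 * T - 1)%nat with false in E by (symmetry; apply Nat.eqb_neq; lia).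
  rewrite (Csum2_single T d _ (T-1) i0) in E; try lia.
  - rewrite Nat.add_0_r, Hn0 in E.
    replace (3 * T * (T - 1) + (T - 1) =? 3 * T * (T - 1 - 1) + (4 * T - 1))%nat with true in E
      by (symmetry; apply Nat.eqb_eq; nia).
    rewrite cc_real in E. apply RtoC_inj in E. replace (S (T - 1)) with T in E by lia.
    pose proof (coeff_diag j Hj).
    destruct (Rmult_integral _ _ E) as [E1|E1]; auto. rewrite E1 in H0. lra.
  - intros t i Ht Hi. unfold n. destruct (Nat.eqb_spec i j); [|destruct (Nat.eqb_spec i i0)]; split; nia.
  - nia.
  - lia.
  - nia.
  - intros z Hz. apply (poly_identity j n Hj Hn z Hz).
  - intros t i Ht Hi Hne. rewrite Nat.add_0_r. unfold n.
    destruct (Nat.eqb_spec i j).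
    + destruct (Nat.eqb_spec (1 * t + t) (1 * (T - 1 - 1) + (4 * T - 1))); [|reflexivity]. lia.
    + destruct (Nat.eqb_spec i i0).
      * destruct (Nat.eqb_spec (3 * T * t + t) (3 * T * (T - 1 - 1) + (4 * T - 1))); [|reflexivity].
        exfalso. apply Hne. split; [|auto].
        assert (t <= T - 2 \/ t = T - 1)%nat as [Hlt|Heq] by lia; [|auto].
        assert ((3 * T + 1) * t <= (3 * T + 1) * (T - 2))%nat by (apply Nat.mul_le_mono_l; lia).
        nia.
      * destruct (Nat.eqb_spec (0 * t + t) (0 * (T - 1 - 1) + (4 * T - 1))); [|reflexivity]. lia.
Qed.

Lemma coeff_P j t1 : (j < d)%nat -> (t1 < T - 1)%nat -> P (T-1)%nat (S t1) = 0.
Proof.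
  intros Hj Ht1. set (n := fun i => if Nat.eqb i j then 1%nat else 0%nat).
  assert (Hn : n j = 1%nat) by (unfold n; rewrite Nat.eqb_refl; reflexivity).
  assert (E := extract T d (cc j) (fun t i => n i * t + t)%nat (fun t i => n i * (T-1-1))%nat T (10*T*T) T (2 * t1 + 2)).
  cbv beta in E.
  replace (T + T =? 2 * t1 + 2)%nat with false in E by (symmetry; apply Nat.eqb_neq; lia).
  rewrite (Csum2_single T d _ t1 j) in E; try lia.
  - rewrite Hn in E.
    replace (1 * t1 + t1 + T =? 1 * (T - 1 - 1) + (2 * t1 + 2))%nat with true in E
      by (symmetry; apply Nat.eqb_eq; lia).
    rewrite cc_real in E. apply RtoC_inj in E.
    pose proof (coeff_diag j Hj).
    destruct (Rmult_integral _ _ E) as [E1|E1]; auto. rewrite E1 in H0. lra.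
  - intros t i Ht Hi. unfold n. destruct (Nat.eqb_spec i j); split; nia.
  - nia.
  - nia.
  - nia.
  - intros z Hz. apply (poly_identity j n Hj Hn z Hz).
  - intros t i Ht Hi Hne. unfold n.
    destruct (Nat.eqb_spec i j).
    + destruct (Nat.eqb_spec (1 * t + t + T) (1 * (T - 1 - 1) + (2 * t1 + 2))); [|reflexivity].
      exfalso. apply Hne. split; [lia|auto].
    + destruct (Nat.eqb_spec (0 * t + t + T) (0 * (T - 1 - 1) + (2 * t1 + 2))); [|reflexivity].
      rewrite cc_real, coeff_off by auto. rewrite Rmult_0_r. reflexivity.
Qed.
End Coeffs.

From mathcomp Require all_boot all_algebra Rstruct.
Module RankPart.
Import all_boot all_algebra Rstruct.
Import GRing.Theory.
Local Open Scope ring_scope.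

Lemma sum_Rsum (n : nat) (f : nat -> R) :
  (\sum_(h < n) f h)%R = Rsum n f.
Proof.
elim: n => [|n IH]; first by rewrite big_ord0.
by rewrite big_ord_recr /= IH.
Qed.

Lemma rank_bound (d H : nat) (A B : nat -> nat -> R) :
  (forall i j, (i < d)%coq_nat -> (j < d)%coq_nat -> i <> j -> Cmat H A B i j = 0%R) ->
  (forall i, (i < d)%coq_nat -> Cmat H A B i i <> 0%R) -> (d <= H)%coq_nat.
Proof.
move=> Hoff Hdiag.
pose X : 'M[R]_(d, H) := \matrix_(i < d, h < H) (B h i / Cmat H A B i i).
pose Y : 'M[R]_(H, d) := \matrix_(h < H, j < d) A h j.
have XY : (X *m Y)%R = 1%:M%R.
  apply/matrixP => i j; rewrite !mxE.
  have -> : (\sum_(h < H) X i h * Y h j)%R = Rsum H (fun h => B h i * A h j) / Cmat H A B i i.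
    rewrite -sum_Rsum /Rdiv big_distrl /=.
    apply: eq_bigr => h _; rewrite !mxE.
    rewrite /GRing.mul /=. ring.
  have Hi := Hdiag i (elimT ltP (ltn_ord i)).
  case: (eqVneq i j) => [<-|nij].
    rewrite -/(Cmat H A B i i) divff //; by apply/eqP.
  rewrite -/(Cmat H A B i j) Hoff //; first by rewrite mul0r.
  - exact: (elimT ltP (ltn_ord i)).
  - exact: (elimT ltP (ltn_ord j)).
  by move=> /val_inj; apply/eqP.
apply/leP.
have := mulmx_max_rank X Y.
by rewrite XY mxrank1.
Qed.
End RankPart.


Theorem proposition3 (d H Tmax : nat) (A B P : nat -> nat -> R) :
  (1 <= d)%nat -> (1 <= H)%nat -> (2 <= Tmax)%nat ->
  loss d H Tmax A B P = 0 ->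
  (forall T : nat, (2 <= T <= Tmax)%nat ->
     (forall t : nat, (1 <= t <= T - 1)%nat -> P (T - 1)%nat t = 0) /\
     (forall i : nat, (i < d)%nat -> P (T - 1)%nat T * Cmat H A B i i = 1) /\
     (forall i j : nat, (i < d)%nat -> (j < d)%nat -> i <> j ->
        Cmat H A B i j = 0)) /\
  (d <= H)%nat /\
  (forall lam : nat -> Cx, (forall i, (i < d)%nat -> Cmod (lam i) = 1) ->
   forall T : nat, (2 <= T <= Tmax)%nat ->
   forall j : nat, (j < d)%nat ->
     model d H A B P (e_seq lam) T j =
       Cmult (Cmult (Cconj (e_seq lam (T - 1)%nat j)) (e_seq lam T j))
             (e_seq lam T j) /\
     model d H A B P (e_seq lam) T j = cpown (lam j) T).
Proof.
  intros Hd HH HTmax HL.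
  assert (Hpt := pointwise d H Tmax A B P HL).
  assert (Hfull : forall T : nat, (2 <= T <= Tmax)%nat ->
     (forall t : nat, (1 <= t <= T - 1)%nat -> P (T - 1)%nat t = 0) /\
     (forall i : nat, (i < d)%nat -> P (T - 1)%nat T * Cmat H A B i i = 1) /\
     (forall i j : nat, (i < d)%nat -> (j < d)%nat -> i <> j ->
        Cmat H A B i j = 0)).
  { intros T HT. assert (HT2 : (2 <= T)%nat) by lia.
    assert (Hp := Hpt T HT). split; [|split].
    - intros t Ht. replace t with (S (t - 1)) by lia.
      apply (coeff_P d H A B P T HT2 Hp 0); lia.
    - intros i Hi. apply (coeff_diag d H A B P T HT2 Hp i Hi).
    - intros i j Hi Hj Hij. apply (coeff_off d H A B P T HT2 Hp i j Hi Hj). auto. }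
  split; [exact Hfull|split].
  - destruct (Hfull 2%nat ltac:(lia)) as [_ [Hdiag Hoff]].
    apply (RankPart.rank_bound d H A B).
    + intros i j Hi Hj Hij. apply Hoff; auto.
    + intros i Hi E. specialize (Hdiag i Hi). rewrite E, Rmult_0_r in Hdiag. lra.
  - intros lam Hlam T HT j Hj. assert (E := Hpt T HT lam Hlam j Hj). split; [|exact E].
    rewrite E. unfold e_seq. set (z := lam j). set (w := cpown z (T - 1 - 1)).
    assert (E1 : cpown z (T - 1) = (w * z)%C).
    { unfold w. replace (T - 1)%nat with (T - 1 - 1 + 1)%nat at 1 by lia. rewrite cpown_add, cpown_1. reflexivity. }
    assert (E2 : cpown z T = (w * z * z)%C).
    { unfold w. replace T with (T - 1 - 1 + 1 + 1)%nat at 1 by lia. rewrite !cpown_add, !cpown_1. reflexivity. }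
    assert (Hw : (w * Cconj w)%C = RtoC 1).
    { rewrite <- Cmod2_conj. unfold w. rewrite Cmod_cpown. unfold z. rewrite (Hlam j Hj). rewrite !pow1. reflexivity. }
    rewrite E1, E2. transitivity ((w * Cconj w) * (w * z * z))%C.
    rewrite Hw. ring. ring.
Qed.
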